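(* Let $N\ge1$, $n=\sum_{\nu=1}^N n_\nu$, $m\ge1$. For $\nu=1,\dots,N$ let $Q_\nu\in\mathbb{R}^{n_\nu\times n_\nu}$ be symmetric positive definite, $c_\nu\in\mathbb{R}^{n_\nu}$, and $X_\nu\subseteq\mathbb{R}^{n_\nu}$ nonempty, convex and closed; let $X=X_1\times\dots\times X_N$. Let $a\in\mathbb{R}^m$, $a\ge0$, $Q_y\in\mathbb{R}^{m\times m}$ positive definite diagonal, and $b,l:\mathbb{R}^n\to\mathbb{R}^m$ differentiable. Define $$\varphi(x)=\sum_{i=1}^m a_i\max\{(Q_y^{-1}b(x))_i,\,l_i(x)\},\qquad \Theta(x)=\sum_{\nu=1}^N\Big[\tfrac12 x_\nu^\top Q_\nu x_\nu+c_\nu^\top x_\nu\Big]+\varphi(x).$$ Assume there exist $\rho\ge0$ and $\omega_1,\omega_2\in\mathbb{R}$ such that for all $x\in X$ with $\|x\|>\rho$, $$\min\{0,\varphi(x)\}\ge\omega_1\|x\|+\omega_2.$$ Then $\Theta$ is coercive on $X$, i.e. $\Theta(x)\to\infty$ as $\|x\|\to\infty$ with $x\in X$.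
   Context: Here $x=(x_1,\dots,x_N)$ with $x_\nu\in\mathbb{R}^{n_\nu}$; the maxima are componentwise. *)

(* Defs.v *)
From HB Require Import structures.
From mathcomp Require Import all_boot all_order all_algebra.
From mathcomp Require Import all_classical all_reals all_analysis.
Set Implicit Arguments. Unset Strict Implicit. Unset Printing Implicit Defensive.
Import Order.TTheory GRing.Theory Num.Theory.
Import numFieldNormedType.Exports.
Local Open Scope ring_scope.
Local Open Scope classical_set_scope.

(* Vectors are row vectors 'rV[R]_k; x^T Q x is (x *m Q *m x^T) 0 0. *)

Definition enorm (R : realType) (k : nat) (x : 'rV[R]_k) : R :=
  Num.sqrt (\sum_(i < k) x 0 i ^+ 2).

Definition symmetric_mx (R : realType) (k : nat) (Q : 'M[R]_k) : Prop :=
  Q^T = Q.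

Definition posdef_mx (R : realType) (k : nat) (Q : 'M[R]_k) : Prop :=
  forall v : 'rV[R]_k, v != 0 -> 0 < (v *m Q *m v^T) 0 0.

Definition block (R : realType) (N : nat) (n_ : 'I_N -> nat)
  (x : 'rV[R]_(\sum_(nu < N) n_ nu)) (nu : 'I_N) : 'rV[R]_(n_ nu) :=
  submxrow x nu.

Definition phi_fun (R : realType) (n m : nat) (a : 'rV[R]_m) (Qy : 'M[R]_m)
  (b l : 'rV[R]_n -> 'rV[R]_m) (x : 'rV[R]_n) : R :=
  \sum_(i < m) a 0 i * Num.max ((invmx Qy *m (b x)^T) i 0) (l x 0 i).

Definition Theta_fun (R : realType) (N : nat) (n_ : 'I_N -> nat) (m : nat)
  (Q_ : forall nu : 'I_N, 'M[R]_(n_ nu)) (c_ : forall nu : 'I_N, 'rV[R]_(n_ nu))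
  (a : 'rV[R]_m) (Qy : 'M[R]_m)
  (b l : 'rV[R]_(\sum_(nu < N) n_ nu) -> 'rV[R]_m)
  (x : 'rV[R]_(\sum_(nu < N) n_ nu)) : R :=
  \sum_(nu < N) (2^-1 * (block x nu *m Q_ nu *m (block x nu)^T) 0 0
                 + (c_ nu *m (block x nu)^T) 0 0)
  + phi_fun a Qy b l x.

(* Main.v *)
Require Import Defs.
From HB Require Import structures.
From mathcomp Require Import all_boot all_order all_algebra.
From mathcomp Require Import all_classical all_reals all_analysis.
From mathcomp Require Import lra.
Import Order.TTheory GRing.Theory Num.Theory.
Import numFieldNormedType.Exports.
Local Open Scope ring_scope.
Local Open Scope classical_set_scope.
Set Implicit Arguments. Unset Strict Implicit.

Section Gen.
Variable R : realType.

Definition sumsq k (v : 'rV[R]_k) := \sum_(i < k) v 0 i ^+ 2.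

Lemma sumsq_ge0 k (v : 'rV[R]_k) : 0 <= sumsq v.
Proof. by apply: sumr_ge0 => i _; rewrite sqr_ge0. Qed.

Lemma sumsq_gt0 k (v : 'rV[R]_k) : v != 0 -> 0 < sumsq v.
Proof.
move=> v0; rewrite lt_def sumsq_ge0 andbT; apply: contra v0 => /eqP.
move/psumr_eq0P => H; apply/eqP/matrixP => i j; rewrite (ord1 i) mxE.
by apply/eqP; rewrite -sqrf_eq0; apply/eqP/H => // l _; rewrite sqr_ge0.
Qed.

Lemma enorm_sq k (v : 'rV[R]_k) : enorm v ^+ 2 = sumsq v.
Proof. by rewrite /enorm sqr_sqrtr // sumsq_ge0. Qed.

Lemma enorm_gt0 k (v : 'rV[R]_k) : v != 0 -> 0 < enorm v.
Proof. by move=> /sumsq_gt0 h; rewrite /enorm sqrtr_gt0. Qed.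

Lemma enorm_ge0 k (v : 'rV[R]_k) : 0 <= enorm v.
Proof. by rewrite /enorm sqrtr_ge0. Qed.

Lemma sumsqZ k t (v : 'rV[R]_k) : sumsq (t *: v) = t ^+ 2 * sumsq v.
Proof. rewrite /sumsq mulr_sumr; apply: eq_bigr => i _; by rewrite mxE exprMn. Qed.

Lemma sumsq_cont k : continuous (@sumsq k).
Proof.
change (continuous (fun v : 'rV[R]_k => \sum_(i < k) v 0 i ^+ 2)).
apply: (@continuous_big _ _ +%R 0 _ add_continuous) => i _ y.
have h : {for y, continuous (fun x : 'rV[R]_k => x 0 i)} by exact: (@coord_continuous R 1 k 0 i).
exact: (continuousM h h).
Qed.

Lemma core k (f : 'rV[R]_k -> R) (p : nat) :
  continuous f -> (forall t v, 0 < t -> f (t *: v) = t ^+ p * f v) ->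
  (exists v : 'rV[R]_k, v != 0) ->
  exists c : 'rV[R]_k, c != 0 /\ forall v, v != 0 -> f c * enorm v ^+ p <= f v.
Proof.
move=> fc fh [v0 v00].
pose S := [set v : 'rV[R]_k | sumsq v = 1].
have nrm v : v != 0 -> S ((enorm v)^-1 *: v).
  move=> vn0; rewrite /S /= sumsqZ -enorm_sq exprVn mulVf //.
  by rewrite expf_neq0 // gt_eqF // enorm_gt0.
have S0 : S !=set0 by exists ((enorm v0)^-1 *: v0); exact: nrm.
have cS : compact S.
  apply: bounded_closed_compact.
    exists 1; split; first by rewrite num_real.
    move=> M M1 v /= Sv.
    rewrite [leLHS]/Num.Def.normr /= mx_normrE; apply/bigmax_leP; split; first by rewrite ltW // (lt_trans _ M1).
    move=> [i j] _ /=; rewrite (ord1 i); apply: ltW; apply: le_lt_trans M1.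
    rewrite -(expr_le1 (n:=2)) // -Sv real_normK ?num_real //.
    by rewrite /sumsq (bigD1 j) //= lerDl sumr_ge0 // => l _; rewrite sqr_ge0.
  apply: (preimage_closed (f := @sumsq k) (D := [set x | x = 1])).
    by move=> x _; apply: sumsq_cont.
  exact: closed_eq.
have [c cSin cmin] := compact_EVT_min S0 cS (continuous_subspaceT fc).
have Sc : S c by rewrite inE in cSin.
have c0 : c != 0.
  apply/eqP => c0; move: Sc; rewrite /S /= c0.
  have -> : sumsq (0 : 'rV[R]_k) = 0 by rewrite /sumsq big1 // => i _; rewrite mxE expr0n.
  by move/eqP; rewrite eq_sym oner_eq0.
exists c; split => // v vn0.
have e0 := enorm_gt0 vn0.
have -> : v = enorm v *: ((enorm v)^-1 *: v).
  by rewrite scalerA mulfV ?gt_eqF // scale1r.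
rewrite fh // scalerA mulfV ?gt_eqF // scale1r mulrC ler_wpM2l //.
  by rewrite exprn_ge0 // ltW.
by apply: cmin; rewrite inE; apply: nrm.
Qed.

End Gen.
Section S2.
Variable R : realType.

Lemma cont_quad (T : topologicalType) k (u : T -> 'rV[R]_k) (A : 'M[R]_k) :
  (forall j, continuous (fun x => u x 0 j)) ->
  continuous (fun x => (u x *m A *m (u x)^T) 0 0).
Proof.
move=> hu.
have -> : (fun x => (u x *m A *m (u x)^T) 0 0) =
  (fun x => \sum_(j < k) (\sum_(l < k) u x 0 l * A l j) * u x 0 j).
  by apply/funext => x; rewrite !mxE; apply: eq_bigr => j _; rewrite !mxE.
apply: (@continuous_big _ _ +%R 0 _ add_continuous) => j _ y.
apply: continuousM; last exact: hu.
apply: (@continuous_big _ _ +%R 0 _ add_continuous) => l _ z.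
apply: continuousM; first exact: hu.
exact: cst_continuous.
Qed.

Lemma cont_lin (T : topologicalType) k (u : T -> 'rV[R]_k) (c : 'rV[R]_k) :
  (forall j, continuous (fun x => u x 0 j)) ->
  continuous (fun x => (c *m (u x)^T) 0 0).
Proof.
move=> hu.
have -> : (fun x => (c *m (u x)^T) 0 0) =
  (fun x => \sum_(j < k) c 0 j * u x 0 j).
  by apply/funext => x; rewrite !mxE; apply: eq_bigr => j _; rewrite !mxE.
apply: (@continuous_big _ _ +%R 0 _ add_continuous) => j _ y.
apply: continuousM; last exact: hu.
exact: cst_continuous.
Qed.

Variables (N : nat) (n_ : 'I_N -> nat).
Notation n := (\sum_(nu < N) n_ nu)%N.

Lemma block_cont nu j : continuous (fun x : 'rV[R]_n => block x nu 0 j).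
Proof.
have -> : (fun x : 'rV[R]_n => block x nu 0 j) = (fun x : 'rV[R]_n => x 0 (tagnat.Rank nu j)).
  by apply/funext => x; rewrite /block /submxrow mxE.
exact: (@coord_continuous R 1 n 0 (tagnat.Rank nu j)).
Qed.

Lemma blockZ (t : R) (x : 'rV[R]_n) nu : block (t *: x) nu = t *: block x nu.
Proof. by apply/matrixP => i j; rewrite !mxE. Qed.

Lemma block_nz (x : 'rV[R]_n) : x != 0 -> exists nu, block x nu != 0.
Proof.
move=> x0; apply/not_existsP => H; move/eqP: x0; apply.
apply/mxrowP => nu; rewrite submxrow0; move: (H nu) => /negP.
by rewrite negbK => /eqP.
Qed.


End S2.
Unset Implicit Arguments.
Theorem mainTheorem3 (R : realType) (N : nat) (n_ : 'I_N -> nat) (m : nat)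
  (Q_ : forall nu : 'I_N, 'M[R]_(n_ nu)) (c_ : forall nu : 'I_N, 'rV[R]_(n_ nu))
  (X_ : forall nu : 'I_N, set 'rV[R]_(n_ nu))
  (a : 'rV[R]_m) (Qy : 'M[R]_m)
  (b l : 'rV[R]_(\sum_(nu < N) n_ nu) -> 'rV[R]_m) :
  (1 <= N)%N -> (forall nu, (1 <= n_ nu)%N) -> (1 <= m)%N ->
  (forall nu, symmetric_mx (Q_ nu) /\ posdef_mx (Q_ nu)) ->
  (forall nu, X_ nu !=set0 /\ convex_set (X_ nu) /\ closed (X_ nu)) ->
  (forall i, 0 <= a 0 i) ->
  is_diag_mx Qy -> posdef_mx Qy ->
  (forall x, differentiable b x) -> (forall x, differentiable l x) ->
  (exists rho omega1 omega2 : R, 0 <= rho /\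
     forall x, (forall nu, X_ nu (block x nu)) -> rho < enorm x ->
       omega1 * enorm x + omega2 <= Num.min 0 (phi_fun a Qy b l x)) ->
  (* coercivity of Theta on X = X_1 x ... x X_N *)
  forall M : R, exists r : R, forall x,
    (forall nu, X_ nu (block x nu)) -> r < enorm x ->
    M < Theta_fun Q_ c_ a Qy b l x.
Proof.
move=> _ _ _ HQ _ _ _ _ _ _ [rho [w1 [w2 [rho0 Hphi]]]] M.
pose Qf := fun x : 'rV[R]_(\sum_(nu < N) n_ nu) =>
  \sum_(nu < N) (block x nu *m Q_ nu *m (block x nu)^T) 0 0.
pose Lf := fun x : 'rV[R]_(\sum_(nu < N) n_ nu) =>
  \sum_(nu < N) (c_ nu *m (block x nu)^T) 0 0.
have ThE x : Theta_fun Q_ c_ a Qy b l x = 2^-1 * Qf x + Lf x + phi_fun a Qy b l x.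
  by rewrite /Theta_fun big_split /= -mulr_sumr.
have Qc : continuous Qf.
  move=> y; apply: (@continuous_big _ _ +%R 0 _ add_continuous) => nu _ z.
  have hq := cont_quad (u := fun x => block x nu) (A := Q_ nu) (fun j => @block_cont R N n_ nu j); exact: hq.
have Lc : continuous Lf.
  move=> y; apply: (@continuous_big _ _ +%R 0 _ add_continuous) => nu _ z.
  have hq := cont_lin (u := fun x => block x nu) (c := c_ nu) (fun j => @block_cont R N n_ nu j); exact: hq.
have Qh t v : 0 < t -> Qf (t *: v) = t ^+ 2 * Qf v.
  move=> _; rewrite /Qf mulr_sumr; apply: eq_bigr => nu _.
  rewrite blockZ linearZ /= -!scalemxAl -scalemxAr !mxE.
  by rewrite expr2 mulrA.
have Lh t v : 0 < t -> Lf (t *: v) = t ^+ 1 * Lf v.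
  move=> _; rewrite /Lf expr1 mulr_sumr; apply: eq_bigr => nu _.
  by rewrite blockZ linearZ /= -scalemxAr !mxE.
have Qpos v : v != 0 -> 0 < Qf v.
  move=> /block_nz [nu hnu]; rewrite /Qf (bigD1 nu) //=.
  apply: (@lt_le_trans _ _ ((block v nu *m Q_ nu *m (block v nu)^T) 0 0)).
    exact: (proj2 (HQ nu)).
  rewrite lerDl; apply: sumr_ge0 => mu _.
  have [->|h] := eqVneq (block v mu) 0.
    by rewrite !mul0mx mxE.
  exact/ltW/(proj2 (HQ mu)).
have [ex|nex] := pselect (exists v : 'rV[R]_(\sum_(nu < N) n_ nu), v != 0); last first.
  exists 0 => x _ hx; exfalso; apply: nex; exists x; apply/eqP => x0.
  move: hx; rewrite x0 /enorm big1 ?sqrtr0 ?ltxx // => i _; by rewrite mxE expr0n.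
have [c [c0 hc]] := core Qc Qh ex.
have [d [_ hd]] := core Lc Lh ex.
have lam0 : 0 < Qf c := Qpos c c0.
set lam := Qf c in lam0 hc; set mu := Lf d in hd.
pose S := `|mu + w1| + `|w2| + `|M| + 1.
have S0 : 0 < S by rewrite /S; have := normr_ge0 (mu + w1); have := normr_ge0 w2; have := normr_ge0 M; lra.
pose K := 2 * S / lam.
exists (Num.max rho (Num.max 1 K)) => x HX.
rewrite !gt_max => /andP[erho /andP[e1 eK]].
have x0 : x != 0 by apply/eqP => x0; move: e1; rewrite x0 /enorm big1 ?sqrtr0 ?ltr10 // => i _; rewrite mxE expr0n.
have := Hphi x HX erho; rewrite le_min => /andP[_ hphi].
have hQ := hc x x0; have hL := hd x x0.
rewrite ThE.
set e := enorm x in erho e1 eK hphi hQ hL *; clearbody e lam mu.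
have hK : 2 * S < e * lam by rewrite /K ltr_pdivrMr // in eK.
have SE : S = `|mu + w1| + `|w2| + `|M| + 1 by [].
clearbody S.
have nB : - (mu + w1) <= `|mu + w1| by rewrite -normrN ler_norm.
have nC : - w2 <= `|w2| by rewrite -normrN ler_norm.
have nM : M <= `|M| by rewrite ler_norm.
rewrite expr1 in hL.
have e0 : 0 < e by apply: lt_trans e1; exact: ltr01.
have h0 : 2 * S * e < e * lam * e by rewrite ltr_pM2r.
have h1 : S * e < 2^-1 * lam * e ^+ 2 by rewrite expr2; lra.
have h2 : `|mu + w1| * e >= - (mu + w1) * e by nra.
have h3 : `|w2| + `|M| + 1 <= (`|w2| + `|M| + 1) * e.
  have hw := normr_ge0 w2; have hm := normr_ge0 M; nra.
rewrite SE in h1.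
move: hQ hL hphi h1 h2 h3 nC nM.
generalize (Qf x) (Lf x) (phi_fun a Qy b l x) => q1 q2 q3.
move=> *; lra.
Qed.
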